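(* For any real number $s\ge 1$ that is not an integer, $$\sum_{i=0}^{\lfloor s\rfloor+1}\binom{s}{i}<2^s+\frac{1}{4(s+1)}.$$
   Context: For real $s$ and integer $i\ge0$, $\binom{s}{i}=\frac{s(s-1)\cdots(s-i+1)}{i!}$ (with $\binom{s}{0}=1$). *)

(* Defs.v *)
From Stdlib Require Import Reals Lra Lia ZArith.
Open Scope R_scope.

Fixpoint falling (s : R) (i : nat) : R :=
  match i with
  | O => 1
  | S j => falling s j * (s - INR j)
  end.

Definition gbinom (s : R) (i : nat) : R := falling s i / INR (fact i).

Fixpoint sum_upto (f : nat -> R) (n : nat) : R :=
  match n with
  | O => f O
  | S m => sum_upto f m + f (S m)
  end.

(* Main.v *)
Require Import Defs.
From Stdlib Require Import Reals ZArith Lra Lia.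
Open Scope R_scope.

Lemma dpl_ext f g x l : (forall t, f t = g t) -> derivable_pt_lim f x l -> derivable_pt_lim g x l.
Proof.
  intros H D eps He. destruct (D eps He) as [d Hd]. exists d. intros h H1 H2.
  rewrite <- !H. apply Hd; auto.
Qed.

Fixpoint Pk (a : R) (k : nat) (x : R) : R :=
  match k with O => 0 | S j => Pk a j x + gbinom a j * x ^ j end.

Definition Fk a k x := Rpower (1 + x) a - Pk a k x.
Definition btw u v := (0 <= u <= v) \/ (v <= u <= 0).

Lemma falling_shift a i : falling a (S i) = a * falling (a - 1) i.
Proof.
  induction i.
  - simpl. ring.
  - change (falling a (S (S i))) with (falling a (S i) * (a - INR (S i))).
    rewrite IHi. simpl falling. rewrite S_INR. ring.
Qed.

Lemma gbinom_shift a k : a * gbinom (a - 1) k = gbinom a (S k) * INR (S k).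
Proof.
  unfold gbinom. rewrite falling_shift. change (fact (S k)) with (S k * fact k)%nat.
  rewrite mult_INR. field. split. apply INR_fact_neq_0. apply not_0_INR; lia.
Qed.

Lemma Pk_deriv a k t : derivable_pt_lim (Pk a (S k)) t (a * Pk (a - 1) k t).
Proof.
  induction k.
  - apply dpl_ext with (fun _ => 1).
    + intros; simpl. unfold gbinom; simpl. field.
    + simpl. replace (a * 0) with 0 by ring. apply derivable_pt_lim_const.
  - apply dpl_ext with (fun x => Pk a (S k) x + gbinom a (S k) * x ^ (S k)).
    + intros; reflexivity.
    + replace (a * Pk (a - 1) (S k) t) with
        (a * Pk (a - 1) k t + gbinom a (S k) * (INR (S k) * t ^ pred (S k))).
      * apply (derivable_pt_lim_plus (Pk a (S k)) (fun x => gbinom a (S k) * x ^ (S k))).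
        exact IHk. apply (derivable_pt_lim_scal (fun x => x ^ S k)). apply derivable_pt_lim_pow.
      * simpl Pk at 2. simpl pred. rewrite <- (Rmult_assoc (gbinom a (S k))), <- gbinom_shift. ring.
Qed.

Lemma Rpow_deriv a t : -1 < t -> derivable_pt_lim (fun x => Rpower (1 + x) a) t (a * Rpower (1 + t) (a - 1)).
Proof.
  intros Ht.
  apply dpl_ext with (comp (fun x => Rpower x a) (fun x => 1 + x)).
  - intros; reflexivity.
  - replace (a * Rpower (1 + t) (a - 1)) with ((a * Rpower (1 + t) (a - 1)) * 1) by ring.
    apply derivable_pt_lim_comp.
    + apply dpl_ext with (fun x => fct_cte 1 x + id x). intros; reflexivity.
      pose proof (derivable_pt_lim_plus (fct_cte 1) id t 0 1 (derivable_pt_lim_const 1 t) (derivable_pt_lim_id t)) as D.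
      rewrite Rplus_0_l in D. exact D.
    + apply derivable_pt_lim_power. lra.
Qed.

Lemma Fk_deriv a k t : -1 < t -> derivable_pt_lim (Fk a (S k)) t (a * Fk (a - 1) k t).
Proof.
  intros Ht. unfold Fk.
  replace (a * (Rpower (1 + t) (a - 1) - Pk (a - 1) k t)) with
    (a * Rpower (1 + t) (a - 1) - a * Pk (a - 1) k t) by ring.
  apply (derivable_pt_lim_minus (fun x => Rpower (1 + x) a) (Pk a (S k))).
  apply Rpow_deriv; auto. apply Pk_deriv.
Qed.

Lemma Pk_0 a k : Pk a (S k) 0 = 1.
Proof.
  induction k. simpl. unfold gbinom. simpl. field.
  change (Pk a (S (S k)) 0) with (Pk a (S k) 0 + gbinom a (S k) * 0 ^ (S k)).
  rewrite IHk. simpl. ring.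
Qed.

Lemma btw_scal c u v : btw u v -> btw (c * u) (c * v).
Proof.
  unfold btw; intros [[H1 H2]|[H1 H2]]; destruct (Rle_or_lt 0 c).
  left; split; nra. right; split; nra. right; split; nra. left; split; nra.
Qed.

Lemma main_ind k : forall a, a <= INR k -> forall x, 0 <= x -> btw (Fk a k x) (gbinom a k * x ^ k).
Proof.
  induction k; intros a Ha x Hx.
  - unfold Fk, btw; simpl. left. unfold gbinom; simpl.
    replace (1/1*1) with 1 by field. unfold Rpower.
    assert (0 <= ln (1 + x)). { rewrite <- ln_1. destruct (Req_dec x 0) as [->|]. rewrite Rplus_0_r; lra. left; apply ln_increasing; lra. }
    simpl in Ha. pose proof (exp_pos (a * ln (1 + x))).
    split. lra. rewrite Rminus_0_r. rewrite <- exp_0 at 2. destruct (Req_dec (a * ln (1+x)) 0) as [->|]. lra. left. apply exp_increasing. nra.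
  - destruct (Req_dec x 0) as [->|Hx0].
    + unfold Fk. rewrite Pk_0. unfold Rpower. rewrite Rplus_0_r, ln_1, Rmult_0_r, exp_0.
      simpl. left. split; lra.
    + assert (Hxp : 0 < x) by lra.
      set (G := gbinom a (S k)).
      assert (HD : forall c, 0 <= c <= x -> derivable_pt_lim (Fk a (S k)) c (a * Fk (a - 1) k c)).
      { intros c Hc. apply Fk_deriv. lra. }
      assert (HK : forall c, 0 <= c <= x -> derivable_pt_lim (fun y => G * y ^ (S k) - Fk a (S k) y) c
                    (G * (INR (S k) * c ^ k) - a * Fk (a - 1) k c)).
      { intros c Hc. apply (derivable_pt_lim_minus (fun y => G * y ^ (S k)) (Fk a (S k))).
        apply (derivable_pt_lim_scal (fun y => y ^ S k)). apply derivable_pt_lim_pow. apply HD; auto. }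
      destruct (MVT_cor2 _ _ 0 x Hxp HD) as [c1 [E1 Hc1]].
      destruct (MVT_cor2 _ _ 0 x Hxp HK) as [c2 [E2 Hc2]].
      assert (F0 : Fk a (S k) 0 = 0).
      { unfold Fk. rewrite Pk_0. unfold Rpower. rewrite Rplus_0_r, ln_1, Rmult_0_r, exp_0. ring. }
      rewrite F0 in E1, E2. simpl pow in E2 at 2.
      assert (Ha1 : a - 1 <= INR k) by (rewrite S_INR in Ha; lra).
      assert (B1 := btw_scal a _ _ (IHk (a - 1) Ha1 c1 ltac:(lra))).
      assert (B2 := btw_scal a _ _ (IHk (a - 1) Ha1 c2 ltac:(lra))).
      rewrite <- Rmult_assoc, gbinom_shift in B1, B2. fold G in B1, B2.
      assert (P1 : 0 <= c1 ^ k) by (apply pow_le; lra).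
      assert (P2 : 0 <= c2 ^ k) by (apply pow_le; lra).
      assert (PS : 0 < INR (S k)) by (apply lt_0_INR; lia).
      assert (PX : 0 <= x ^ S k) by (apply pow_le; lra).
      unfold btw in *.
      destruct (Rle_or_lt 0 G) as [HG|HG].
      * left.
        assert (0 <= G * INR (S k) * c1 ^ k) by (apply Rmult_le_pos; nra).
        assert (0 <= G * INR (S k) * c2 ^ k) by (apply Rmult_le_pos; nra).
        split; nra.
      * right.
        assert (G * INR (S k) * c1 ^ k <= 0).
        { rewrite Rmult_assoc. assert (0 <= INR (S k) * c1 ^ k) by nra. nra. }
        assert (G * INR (S k) * c2 ^ k <= 0).
        { rewrite Rmult_assoc. assert (0 <= INR (S k) * c2 ^ k) by nra. nra. }
        split; nra.
Qed.

Lemma falling_mono s t j : INR j <= s -> s <= t -> 0 < falling s j <= falling t j.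
Proof.
  induction j; intros H1 H2. simpl; lra.
  rewrite S_INR in H1. simpl.
  destruct IHj as [A B]; try lra.
  assert (0 <= INR j) by apply pos_INR.
  split; nra.
Qed.

Lemma falling_fact j : falling (INR j + 1) j = INR (fact (S j)).
Proof.
  induction j. simpl; ring.
  rewrite falling_shift. replace (INR (S j) + 1 - 1) with (INR j + 1) by (rewrite S_INR; ring).
  rewrite IHj. change (fact (S (S j))) with (S (S j) * fact (S j))%nat.
  rewrite mult_INR. rewrite (S_INR (S j)). ring.
Qed.

Lemma sum_Pk s N : sum_upto (gbinom s) N = Pk s (S N) 1.
Proof.
  induction N. simpl. ring.
  simpl sum_upto. rewrite IHN. change (Pk s (S (S N)) 1) with (Pk s (S N) 1 + gbinom s (S N) * 1 ^ (S N)).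
  rewrite pow1. ring.
Qed.

Theorem lemma2p2 (s : R) (hs : 1 <= s) (hnint : forall n : Z, s <> IZR n) :
  sum_upto (gbinom s) (S (Z.to_nat (Int_part s)))
    < Rpower 2 s + 1 / (4 * (s + 1)).
Proof.
  destruct (base_Int_part s) as [I1 I2].
  assert (Hz : (0 <= Int_part s)%Z).
  { apply le_IZR. lra. }
  set (n := Z.to_nat (Int_part s)).
  assert (Hn : INR n = IZR (Int_part s)).
  { unfold n. rewrite INR_IZR_INZ. rewrite Z2Nat.id; auto. }
  assert (Hlt : INR n < s).
  { rewrite Hn. destruct (Req_dec (IZR (Int_part s)) s). exfalso; apply (hnint (Int_part s)); auto. lra. }
  assert (Hup : s < INR n + 1) by lra.
  rewrite sum_Pk.
  assert (B := main_ind (S (S n)) s ltac:(rewrite !S_INR; lra) 1 ltac:(lra)).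
  unfold Fk in B. rewrite pow1, Rmult_1_r in B. replace (1 + 1) with 2 in B by ring.
  set (X := falling s n).
  assert (HX := falling_mono s (INR n + 1) n ltac:(lra) ltac:(lra)).
  rewrite falling_fact in HX. fold X in HX.
  assert (Hg : gbinom s (S (S n)) = X * (s - INR n) * (s - INR n - 1) / (INR (fact (S n)) * (INR n + 2))).
  { unfold gbinom. change (falling s (S (S n))) with (X * (s - INR n) * (s - INR (S n))). change (fact (S (S n))) with (S (S n) * fact (S n))%nat.
    rewrite mult_INR, !S_INR. field. split. lra. apply INR_fact_neq_0. }
  set (D := INR (fact (S n))) in *.
  set (f := s - INR n) in *.
  assert (HD : 0 < D) by (unfold D; apply lt_0_INR, lt_O_fact).
  assert (Hq : 0 <= X * f * (1 - f) <= D / 4).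
  { assert (0 < f < 1) by (unfold f; lra). assert (0 <= f * (1 - f) <= 1/4) by (split; [apply Rmult_le_pos; lra | pose proof (pow2_ge_0 (f - 1/2)); nra]). split. apply Rmult_le_pos; nra. rewrite Rmult_assoc. nra. }
  assert (Hn2 : 0 < INR n + 2) by lra.
  assert (Hgn : - gbinom s (S (S n)) <= 1 / (4 * (INR n + 2))).
  { rewrite Hg. replace (- (X * f * (f - 1) / (D * (INR n + 2)))) with ((X * f * (1 - f)) / (D * (INR n + 2))) by (field; lra).
    apply Rmult_le_reg_r with (D * (INR n + 2)). nra.
    field_simplify; try lra. }
  assert (Hg0 : gbinom s (S (S n)) <= 0).
  { rewrite Hg. replace (X * f * (f - 1) / (D * (INR n + 2))) with (- ((X * f * (1 - f)) / (D * (INR n + 2)))) by (field; lra).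
    assert (0 <= X * f * (1 - f) / (D * (INR n + 2))). unfold Rdiv. apply Rmult_le_pos. lra. left; apply Rinv_0_lt_compat; nra. lra. }
  assert (Hlast : 1 / (4 * (INR n + 2)) < 1 / (4 * (s + 1))).
  { apply Rmult_lt_compat_l. lra. apply Rinv_lt_contravar; nra. }
  unfold btw in B. destruct B as [[B1 B2]|[B1 B2]]; lra.
Qed.
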